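(* In the setting described in the context, $\frac{qK^{-1}A-q^{-1}AK^{-1}}{q-q^{-1}}=aI$, $\frac{qBK^{-1}-q^{-1}K^{-1}B}{q-q^{-1}}=bI$, $\frac{qKA^*-q^{-1}A^*K}{q-q^{-1}}=a^*I$, $\frac{qB^*K-q^{-1}KB^*}{q-q^{-1}}=b^*I$.
   Context: $\mathbb K$ is an algebraically closed field, $q\in\mathbb K$ nonzero and not a root of unity, $V$ a nonzero finite-dimensional $\mathbb K$-vector space. A tridiagonal pair on $V$ is an ordered pair $A,A^*$ of linear maps $V\to V$ such that: (i) each of $A,A^*$ is diagonalizable; (ii) there is an ordering $V_0,\dots,V_d$ of the eigenspaces of $A$ with $A^*V_i\subseteq V_{i-1}+V_i+V_{i+1}$ ($V_{-1}=V_{d+1}=0$); (iii) there is an ordering $V^*_0,\dots,V^*_\delta$ of the eigenspaces of $A^*$ with $AV^*_i\subseteq V^*_{i-1}+V^*_i+V^*_{i+1}$ ($V^*_{-1}=V^*_{\delta+1}=0$); (iv) no subspace $W\ne0,V$ satisfies $AW\subseteq W$, $A^*W\subseteq W$. It is known $d=\delta$; orderings as in (ii),(iii) are called standard. Setting: $A,A^*$ is a tridiagonal pair on $V$; $V_0,\dots,V_d$ (resp. $V^*_0,\dots,V^*_d$) is a standard ordering of the eigenspaces of $A$ (resp. $A^*$); the eigenvalue of $A$ on $V_i$ is $aq^{2i-d}$ and that of $A^*$ on $V^*_i$ is $a^*q^{d-2i}$ for some nonzero $a,a^*\in\mathbb K$; $b,b^*\in\mathbb K$ are nonzero. For $0\le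 i\le d$, each of the following three families of subspaces forms a decomposition of $V$ (nonzero subspaces, direct sum equal to $V$): $(V^*_0+\cdots+V^*_i)\cap(V_0+\cdots+V_{d-i})$; $(V^*_{d-i}+\cdots+V^*_d)\cap(V_i+\cdots+V_d)$; $(V^*_0+\cdots+V^*_i)\cap(V_i+\cdots+V_d)$. $B$ is the linear map acting as $bq^{2i-d}I$ on $(V^*_0+\cdots+V^*_i)\cap(V_0+\cdots+V_{d-i})$; $B^*$ acts as $b^*q^{d-2i}I$ on $(V^*_{d-i}+\cdots+V^*_d)\cap(V_i+\cdots+V_d)$; $K$ acts as $q^{2i-d}I$ on $(V^*_0+\cdots+V^*_i)\cap(V_i+\cdots+V_d)$ (for each $0\le i\le d$). *)

(* Defs.v *)
From HB Require Import structures.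
From mathcomp Require Import all_boot all_order all_algebra.
Set Implicit Arguments. Unset Strict Implicit. Unset Printing Implicit Defensive.
Import Order.TTheory GRing.Theory Num.Theory.
Local Open Scope ring_scope.

Definition leigenspace (K : fieldType) (V : vectType K) (A : 'End(V)) (th : K)
  : {vspace V} := lker (A - th *: \1%VF).
Definition leigenvalue (K : fieldType) (V : vectType K) (A : 'End(V)) (th : K) : bool :=
  leigenspace A th != 0%VS.

Definition diagonalizable (K : fieldType) (V : vectType K) (A : 'End(V)) : Prop :=
  exists s : seq K, (\sum_(x <- s) leigenspace A x)%VS = fullv.

Definition eigen_ordering (K : fieldType) (V : vectType K) (A : 'End(V))
    (d : nat) (Vs : nat -> {vspace V}) : Prop :=
  [/\ (forall i, (i <= d)%N -> exists th, leigenvalue A th /\ Vs i = leigenspace A th),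
      (forall th, leigenvalue A th -> exists2 i, (i <= d)%N & Vs i = leigenspace A th)
    & (forall i j, (i <= d)%N -> (j <= d)%N -> Vs i = Vs j -> i = j)].

Definition tridiag_cond (K : fieldType) (V : vectType K) (f : 'End(V))
    (d : nat) (Vs : nat -> {vspace V}) : Prop :=
  forall i, (i <= d)%N ->
    (f @: Vs i <= (if i is j.+1 then Vs j else 0) + Vs i
                   + (if (i < d)%N then Vs i.+1 else 0))%VS.

Definition standard_ordering (K : fieldType) (V : vectType K) (A Astar : 'End(V))
    (d : nat) (Vs : nat -> {vspace V}) : Prop :=
  eigen_ordering A d Vs /\ tridiag_cond Astar d Vs.

Definition tridiagonal_pair (K : fieldType) (V : vectType K) (A As : 'End(V)) : Prop :=
  [/\ (0 < \dim (fullv : {vspace V}))%N,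
      diagonalizable A /\ diagonalizable As,
      exists d (Vs : nat -> {vspace V}), standard_ordering A As d Vs,
      exists delta (Vss : nat -> {vspace V}), standard_ordering As A delta Vss
    & forall W : {vspace V}, (A @: W <= W)%VS -> (As @: W <= W)%VS ->
        W = 0%VS \/ W = fullv].

Definition decomposition (K : fieldType) (V : vectType K) (d : nat)
    (U : nat -> {vspace V}) : Prop :=
  [/\ (forall i, (i <= d)%N -> U i != 0%VS),
      directv (\sum_(i < d.+1) U i)
    & (\sum_(i < d.+1) U i)%VS = fullv].

(* Main.v *)
Require Import Defs.
From HB Require Import structures.
From mathcomp Require Import all_boot all_order all_algebra.
Import Order.TTheory GRing.Theory Num.Theory.
Local Open Scope ring_scope.
Set Implicit Arguments.

Lemma lfZ (K : fieldType) (V : vectType K) (h : 'End(V)) (c : K) (x : V) : h (c *: x) = c *: h x.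
Proof. exact: linearZ. Qed.
Lemma lfD (K : fieldType) (V : vectType K) (h : 'End(V)) (x y : V) : h (x + y) = h x + h y.
Proof. exact: linearD. Qed.
Lemma lfB (K : fieldType) (V : vectType K) (h : 'End(V)) (x y : V) : h (x - y) = h x - h y.
Proof. exact: linearB. Qed.


Lemma comm_alg (K : fieldType) (V : vectType K) (f g : 'End(V)) (q th ga : K) (u w : V) :
  q - q^-1 != 0 -> g u = ga *: u -> f u = th *: u + w ->
  q *: g w = (q^-1 * ga) *: w ->
  ((q - q^-1)^-1 *: (q *: (g \o f)%VF - q^-1 *: (f \o g)%VF)) u = (th * ga) *: u.
Proof.
move=> hq gu fu gw.
rewrite scale_lfunE add_lfunE opp_lfunE !scale_lfunE !comp_lfunE.
rewrite gu lfZ fu lfD lfZ gu.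
rewrite [q *: (_ + g w)]scalerDr gw [ga *: (_ + w)]scalerDr [q^-1 *: (_ + _)]scalerDr !scalerA opprD addrACA -!scalerBl.
rewrite subrr scale0r addr0 scalerA; congr (_ *: _).
by rewrite (mulrC ga th) -mulrA -mulrBl mulrA mulVf // mul1r.
Qed.

From mathcomp Require Import ring zify.

Lemma lfun_eq_on (K : fieldType) (V : vectType K) d (U : nat -> {vspace V}) (f g : 'End(V)) :
  (\sum_(i < d.+1) U i)%VS = fullv ->
  (forall i, (i <= d)%N -> forall v, v \in U i -> f v = g v) -> f = g.
Proof.
move=> hs h; apply/lfunP => v.
have: v \in (\sum_(i < d.+1) U i)%VS by rewrite hs memvf.
case/memv_sumP => vs hvs ->; rewrite !raddf_sum; apply: eq_bigr => i _.
by apply: h; [exact: (ltn_ord i) | exact: hvs].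
Qed.

Lemma shift_lem (K : fieldType) (V : vectType K) (f g : 'End(V)) (q th al c : K) (v : V) :
  q != 0 -> q - q^-1 != 0 -> f v = th *: v ->
  ((q - q^-1)^-1 *: (q *: (g \o f)%VF - q^-1 *: (f \o g)%VF)) v = al *: v ->
  th * c = al -> f (g v - c *: v) = (q * q * th) *: (g v - c *: v).
Proof.
move=> q0 hq fv H hal.
move: H; rewrite scale_lfunE add_lfunE opp_lfunE !scale_lfunE !comp_lfunE fv lfZ => H.
have := congr1 (fun y => (q - q^-1) *: y) H; rewrite /= scalerA mulfV // scale1r scalerA => E.
have e1 : q^-1 *: f (g v) = (q*th) *: g v - ((q - q^-1) * al) *: v.
  by move: E; rewrite scalerA => <-; rewrite opprB addrC subrK.
have e2 : f (g v) = (q*q*th) *: g v - (q*(q - q^-1)*al) *: v.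
  have := congr1 (fun y => q *: y) e1; rewrite /= scalerA mulfV // scale1r => ->.
  by rewrite scalerBr !scalerA !mulrA.
rewrite lfB lfZ fv e2 scalerBr !scalerA -addrA -opprD -scalerDl.
congr (_ *: _ - _ *: _).
by rewrite -hal; field.
Qed.

Definition psum {K : fieldType} {V : vectType K} (W : nat -> {vspace V}) (k : nat) :=
  (\sum_(j < k.+1) W j)%VS.
Definition ssum {K : fieldType} {V : vectType K} (W : nat -> {vspace V}) (d k : nat) :=
  (\sum_(k <= j < d.+1) W j)%VS.

Lemma ssumE (K : fieldType) (V : vectType K) (W : nat -> {vspace V}) (d k : nat) :
  ssum W d k = (\sum_(j < d.+1 | (k <= j)%N) W j)%VS.
Proof. by rewrite /ssum big_geq_mkord. Qed.

Lemma psum_sub (K : fieldType) (V : vectType K) (W : nat -> {vspace V}) j k :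
  (j <= k)%N -> (W j <= psum W k)%VS.
Proof. by move=> hjk; apply: (sumv_sup (Ordinal (hjk : (j < k.+1)%N))). Qed.

Lemma psumS (K : fieldType) (V : vectType K) (W : nat -> {vspace V}) k l :
  (k <= l)%N -> (psum W k <= psum W l)%VS.
Proof.
move=> hkl; apply/subv_sumP => j _; apply: psum_sub.
exact: leq_trans (ltn_ord j : (j <= k)%N) hkl.
Qed.

Lemma ssum_sub (K : fieldType) (V : vectType K) (W : nat -> {vspace V}) d j k :
  (k <= j)%N -> (j <= d)%N -> (W j <= ssum W d k)%VS.
Proof. by move=> hkj hjd; rewrite ssumE; apply: (sumv_sup (Ordinal (hjd : (j < d.+1)%N))). Qed.

Lemma ssumS (K : fieldType) (V : vectType K) (W : nat -> {vspace V}) d k l :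
  (k <= l)%N -> (ssum W d l <= ssum W d k)%VS.
Proof.
move=> hkl; rewrite {1}ssumE; apply/subv_sumP => j hj; apply: ssum_sub; last exact: (ltn_ord j).
exact: leq_trans hkl hj.
Qed.

Lemma sum_closed (K : fieldType) (V : vectType K) (I : finType) (P : pred I)
    (Us : I -> {vspace V}) (f : 'End(V)) (X : {vspace V}) :
  (forall i, P i -> forall v, v \in Us i -> f v \in X) ->
  forall v, v \in (\sum_(i | P i) Us i)%VS -> f v \in X.
Proof.
move=> h v /memv_sumP [vs hvs ->]; rewrite raddf_sum; apply: rpred_sum => i Pi.
exact: h (hvs i Pi).
Qed.

Lemma eigenP (K : fieldType) (V : vectType K) (A : 'End(V)) th v :
  (v \in leigenspace A th) = (A v == th *: v).
Proof.
by rewrite memv_ker add_lfunE opp_lfunE scale_lfunE id_lfunE subr_eq0.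
Qed.

Lemma split_dim (K : fieldType) (V : vectType K) d (P Q : nat -> {vspace V}) i :
  (forall k l, (k <= l)%N -> (P k <= P l)%VS) ->
  (forall k l, (k <= l)%N -> (Q l <= Q k)%VS) ->
  directv (\sum_(j < d.+1) (P j :&: Q j)) ->
  (\sum_(j < d.+1) (P j :&: Q j))%VS = fullv ->
  (i < d)%N ->
  (P i <= \sum_(j < d.+1 | (j <= i)%N) (P j :&: Q j))%VS /\
  (Q i.+1 <= \sum_(j < d.+1 | (i < j)%N) (P j :&: Q j))%VS.
Proof.
move=> Pm Qm hdir hfull hid.
set S1 := (\sum_(j < d.+1 | (j <= i)%N) (P j :&: Q j))%VS.
set S2 := (\sum_(j < d.+1 | (i < j)%N) (P j :&: Q j))%VS.
have hS : (S1 + S2)%VS = fullv.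
  rewrite -hfull (bigID (fun j : 'I_d.+1 => (j <= i)%N)) /=; congr (_ + _)%VS.
  by apply: eq_bigl => j; rewrite -ltnNge.
have h1 : (S1 <= P i)%VS.
  by apply/subv_sumP => j hj; apply: subv_trans (capvSl _ _) (Pm _ _ hj).
have h2 : (S2 <= Q i.+1)%VS.
  by apply/subv_sumP => j hj; apply: subv_trans (capvSr _ _) (Qm _ _ hj).
have h0 : (P i :&: Q i.+1 = 0)%VS.
  apply/eqP; rewrite -subv0; apply/subvP => v /memv_capP [hP hQ].
  have hi : (i < d.+1)%N by apply: ltnW.
  move/directv_sumP: hdir => /(_ (Ordinal hi) isT) /eqP; rewrite -subv0 => /subvP; apply.
  rewrite memv_cap; apply/andP; split.
    by rewrite memv_cap hP /=; apply: (subvP (Qm _ _ (leqnSn i))).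
  have hi1 : (i.+1 < d.+1)%N by [].
  apply: (subvP (sumv_sup (Ordinal hi1) _ (subvv _))).
    by rewrite /= -val_eqE /= (gtn_eqF (ltnSn i)).
  by apply/memv_capP; split; [apply: (subvP (Pm _ _ (leqnSn i))) | ].
have dS : (\dim (fullv : {vspace V}) <= \dim S1 + \dim S2)%N.
  by rewrite -hS; exact: (dimv_add_leqif S1 S2).1.
have dPQ : (\dim (P i) + \dim (Q i.+1) <= \dim (fullv : {vspace V}))%N.
  by rewrite -dimv_disjoint_sum //; exact: (dimvS (subvf _)).
have d1 := dimvS h1; have d2 := dimvS h2.
have e1 : \dim S1 = \dim (P i) by lia.
have e2 : \dim S2 = \dim (Q i.+1) by lia.
split.
  by move: (dimv_leqif_eq h1); rewrite e1 => /leqif_refl /eqP <-.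
by move: (dimv_leqif_eq h2); rewrite e2 => /leqif_refl /eqP <-.
Qed.

Lemma tri_sub (K : fieldType) (V : vectType K) (W : nat -> {vspace V}) d i j :
  (j <= i)%N ->
  ((if j is j'.+1 then W j' else 0) + W j + (if (j < d)%N then W j.+1 else 0)
     <= psum W i.+1)%VS.
Proof.
move=> hji; rewrite !subv_add; apply/andP; split; first (apply/andP; split).
- case: j hji => [|j'] h; first exact: sub0v.
  by apply: psum_sub; lia.
- by apply: psum_sub; lia.
- by case: (j < d)%N; [apply: psum_sub; lia | exact: sub0v].
Qed.

Lemma tri_sub2 (K : fieldType) (V : vectType K) (W : nat -> {vspace V}) d i j :
  (i <= j)%N -> (j <= d)%N ->
  ((if j is j'.+1 then W j' else 0) + W j + (if (j < d)%N then W j.+1 else 0)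
     <= ssum W d i.-1)%VS.
Proof.
move=> hij hjd; rewrite !subv_add; apply/andP; split; first (apply/andP; split).
- case: j hij hjd => [|j'] h h'; first exact: sub0v.
  by apply: ssum_sub; lia.
- by apply: ssum_sub; lia.
- by case: ifP => h; [apply: ssum_sub; lia | exact: sub0v].
Qed.

Lemma lfE_shift (K : fieldType) (V : vectType K) (A : 'End(V)) (c : K) (v : V) :
  (A - c *: \1)%VF v = A v - c *: v.
Proof. by rewrite add_lfunE opp_lfunE scale_lfunE id_lfunE. Qed.

Lemma ssum_empty (K : fieldType) (V : vectType K) (W : nat -> {vspace V}) d k :
  (d < k)%N -> ssum W d k = 0%VS.
Proof.
move=> h; rewrite ssumE big_pred0 // => j; apply/negbTE; rewrite -ltnNge.
exact: leq_trans (ltn_ord j) h.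
Qed.

Definition ppre {K : fieldType} {V : vectType K} (W : nat -> {vspace V}) (i : nat) :=
  if i is i'.+1 then psum W i' else 0%VS.

Arguments lfun_eq_on {K V d U f g}.
Arguments comm_alg {K V f g q th ga u w}.
Arguments shift_lem {K V f g q th al c v}.

Unset Implicit Arguments.
Theorem theorem10p1 (K : closedFieldType) (q : K) (V : vectType K)
    (A As : 'End(V)) (d : nat) (Vs Vss : nat -> {vspace V})
    (a as_ b bs : K) (B Bs KK : 'End(V)) :
  q != 0 -> (forall n : nat, (0 < n)%N -> q ^+ n != 1) ->
  tridiagonal_pair A As ->
  standard_ordering A As d Vs ->
  standard_ordering As A d Vss ->
  a != 0 -> as_ != 0 -> b != 0 -> bs != 0 ->
  (forall i, (i <= d)%N -> Vs i = leigenspace A (a * q ^ ((2 * i)%:Z - d%:Z))) ->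
  (forall i, (i <= d)%N -> Vss i = leigenspace As (as_ * q ^ (d%:Z - (2 * i)%:Z))) ->
  decomposition d (fun i => (\sum_(j < i.+1) Vss j) :&: (\sum_(j < (d - i).+1) Vs j))%VS ->
  decomposition d (fun i => (\sum_(d - i <= j < d.+1) Vss j) :&: (\sum_(i <= j < d.+1) Vs j))%VS ->
  decomposition d (fun i => (\sum_(j < i.+1) Vss j) :&: (\sum_(i <= j < d.+1) Vs j))%VS ->
  (forall i, (i <= d)%N -> forall v,
     v \in ((\sum_(j < i.+1) Vss j) :&: (\sum_(j < (d - i).+1) Vs j))%VS ->
     B v = (b * q ^ ((2 * i)%:Z - d%:Z)) *: v) ->
  (forall i, (i <= d)%N -> forall v,
     v \in ((\sum_(d - i <= j < d.+1) Vss j) :&: (\sum_(i <= j < d.+1) Vs j))%VS ->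
     Bs v = (bs * q ^ (d%:Z - (2 * i)%:Z)) *: v) ->
  (forall i, (i <= d)%N -> forall v,
     v \in ((\sum_(j < i.+1) Vss j) :&: (\sum_(i <= j < d.+1) Vs j))%VS ->
     KK v = q ^ ((2 * i)%:Z - d%:Z) *: v) ->
  [/\ (q - q^-1)^-1 *: (q *: ((KK^-1)%VF \o A)%VF - q^-1 *: (A \o (KK^-1)%VF)%VF)
        = a *: \1%VF,
      (q - q^-1)^-1 *: (q *: (B \o (KK^-1)%VF)%VF - q^-1 *: ((KK^-1)%VF \o B)%VF)
        = b *: \1%VF,
      (q - q^-1)^-1 *: (q *: (KK \o As)%VF - q^-1 *: (As \o KK)%VF)
        = as_ *: \1%VF
    & (q - q^-1)^-1 *: (q *: (Bs \o KK)%VF - q^-1 *: (KK \o Bs)%VF)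
        = bs *: \1%VF].
Proof.
move=> q0 qn _ [_ trAsVs] [_ trAVss] a0 as0 b0 bs0 hVs hVss decB decBs decK hB hBs hK.
have hq2 : q - q^-1 != 0.
  apply/eqP => h; move: (qn 2%N isT); rewrite expr2 {1}(subr0_eq h) mulVf //.
  by rewrite eqxx.
pose e i := q ^ ((2 * i)%:Z - d%:Z).
have e0 : forall i, e i != 0 by move=> i; apply: expfz_neq0.
have eS : forall i, e i.+1 = q * q * e i.
  move=> i; rewrite /e -expr2 exprnP -expfzDr //; congr (q ^ _); lia.
have eN : forall i, q ^ (d%:Z - (2 * i)%:Z) = (e i)^-1.
  move=> i; rewrite /e invr_expz; congr (q ^ _); lia.
have hA : forall j, (j <= d)%N -> forall v, v \in Vs j -> A v = (a * e j) *: v.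
  by move=> j hj v; rewrite hVs // eigenP => /eqP.
have hAs : forall j, (j <= d)%N -> forall v, v \in Vss j -> As v = (as_ * (e j)^-1) *: v.
  by move=> j hj v; rewrite hVss // eigenP eN => /eqP.
case: (decK) => _ dirK fullK.
have Kinj : lker KK == 0%VS.
  have himg : limg KK = fullv.
    apply/eqP; rewrite eqEsubv subvf /= -{1}fullK; apply/subv_sumP => i _; apply/subvP => v hv.
    have hi : (i <= d)%N by exact: (ltn_ord i).
    have -> : v = KK ((e i)^-1 *: v) by rewrite lfZ (hK i hi v hv) scalerA mulVf // scale1r.
    exact: memv_img (memvf _).
  have := limg_ker_dim KK fullv; rewrite capfv himg => /eqP.
  by rewrite -{2}[\dim fullv]add0n eqn_add2r dimv_eq0.
have hKi : forall i, (i <= d)%N -> forall v, v \in (psum Vss i :&: ssum Vs d i)%VS ->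
    (KK^-1)%VF v = (e i)^-1 *: v.
  move=> i hi v hv.
  rewrite {1}(_ : v = KK ((e i)^-1 *: v)); first by rewrite (lker0_lfunK Kinj).
  by rewrite lfZ (hK i hi v hv) scalerA mulVf // scale1r.
have L1 : forall i, (i < d)%N ->
   (psum Vss i <= \sum_(j < d.+1 | (j <= i)%N) (psum Vss j :&: ssum Vs d j))%VS /\
   (ssum Vs d i.+1 <= \sum_(j < d.+1 | (i < j)%N) (psum Vss j :&: ssum Vs d j))%VS.
  move=> i hi; apply: (@split_dim K V d (psum Vss) (ssum Vs d)) => //.
    by move=> k l; apply: psumS.
  by move=> k l; apply: ssumS.
have L1a : forall i, (i <= d)%N ->
   (psum Vss i <= \sum_(j < d.+1 | (j <= i)%N) (psum Vss j :&: ssum Vs d j))%VS.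
  move=> i; rewrite leq_eqVlt => /orP [/eqP -> | hi]; last exact: (L1 i hi).1.
  apply: subv_trans (subvf _) _; rewrite -fullK; apply/subv_sumP => j _.
  by apply: (sumv_sup j) => //; exact: (ltn_ord j).
have L1b : forall i, (i <= d)%N ->
   (ssum Vs d i <= \sum_(j < d.+1 | (i <= j)%N) (psum Vss j :&: ssum Vs d j))%VS.
  case=> [|i] hi; last exact: (L1 i hi).2.
  apply: subv_trans (subvf _) _; rewrite -fullK; apply/subv_sumP => j _.
  by apply: (sumv_sup j).
have FAss : forall i, (i <= d)%N -> forall v, v \in psum Vss i -> A v \in psum Vss i.+1.
  move=> i hi; apply: sum_closed => j _ v hv.
  have hji : (j <= i)%N by exact: (ltn_ord j).
  have hjd : (j <= d)%N by exact: leq_trans hji hi.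
  apply: (subvP (@tri_sub _ _ Vss d i j hji)); apply: (subvP (trAVss j hjd)).
  exact: memv_img.
have FAs : forall i, (i <= d)%N -> forall v, v \in ssum Vs d i ->
    A v - (a * e i) *: v \in ssum Vs d i.+1.
  move=> i hi v; rewrite -lfE_shift ssumE; apply: sum_closed => j hij {}v hv.
  have hjd : (j <= d)%N by exact: (ltn_ord j).
  rewrite lfE_shift (hA j hjd v hv) -scalerBl.
  have [hji | hji] := eqVneq (j : nat) i.
    by rewrite hji subrr scale0r mem0v.
  have hij1 : (i < j)%N by rewrite ltn_neqAle eq_sym hji hij.
  by apply: memvZ; apply: (subvP (@ssum_sub _ _ Vs d j i.+1 hij1 hjd)).
have FAsss : forall i, (i <= d)%N -> forall v, v \in psum Vss i ->
    As v - (as_ * (e i)^-1) *: v \in ppre Vss i.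
  move=> i hi v; rewrite -lfE_shift; apply: sum_closed => j _ {}v hv.
  have hji : (j <= i)%N by exact: (ltn_ord j).
  have hjd : (j <= d)%N by exact: leq_trans hji hi.
  rewrite lfE_shift (hAs j hjd v hv) -scalerBl.
  have [hji' | hji'] := eqVneq (j : nat) i.
    by rewrite hji' subrr scale0r mem0v.
  have hlt : (j < i)%N by rewrite ltn_neqAle hji' hji.
  rewrite /ppre; move: hlt; clear hji hji' hjd; case: i hi j hv => [|i'] hi j hv hlt //.
  by apply: memvZ; apply: (subvP (@psum_sub _ _ Vss j i' hlt)).
have FAsVs : forall i, (i <= d)%N -> forall v, v \in ssum Vs d i -> As v \in ssum Vs d i.-1.
  move=> i hi v; rewrite ssumE; apply: sum_closed => j hij {}v hv.
  have hjd : (j <= d)%N by exact: (ltn_ord j).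
  apply: (subvP (@tri_sub2 _ _ Vs d i j hij hjd)); apply: (subvP (trAsVs j hjd)).
  exact: memv_img.
have id1 : (q - q^-1)^-1 *: (q *: ((KK^-1)%VF \o A)%VF - q^-1 *: (A \o (KK^-1)%VF)%VF)
        = a *: \1%VF.
  apply: (lfun_eq_on fullK) => i hi u hu.
  rewrite [X in _ = X]scale_lfunE id_lfunE.
  have gu : (KK^-1)%VF u = (e i)^-1 *: u := hKi i hi u hu.
  have fu : A u = (a * e i) *: u + (A u - (a * e i) *: u) by rewrite addrC subrK.
  have gw : q *: (KK^-1)%VF (A u - (a * e i) *: u) = (q^-1 * (e i)^-1) *: (A u - (a * e i) *: u).
    move: (hu) => /memv_capP [hu1 hu2].
    have w2 := FAs i hi u hu2.
    case: (ltnP i d) => hid.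
      have w1 : A u - (a * e i) *: u \in psum Vss i.+1.
        apply: memvB; first exact: FAss i hi u hu1.
        by apply: memvZ; apply: (subvP (@psumS _ _ Vss i i.+1 (leqnSn i))).
      have hw : A u - (a * e i) *: u \in (psum Vss i.+1 :&: ssum Vs d i.+1)%VS.
        by rewrite memv_cap w1 w2.
      rewrite (hKi i.+1 hid _ hw) scalerA; congr (_ *: _).
      by rewrite eS; field; rewrite ?e0 ?q0.
    have : A u - (a * e i) *: u = 0.
      by apply/eqP; rewrite -memv0 -(@ssum_empty _ _ Vs d i.+1) //; move: hi hid; clear; lia.
    by move=> ->; rewrite linear0 !scaler0.
  by have := comm_alg hq2 gu fu gw; rewrite mulfK.
have Kinv_shift : forall k, (k < d)%N -> forall v, v \in psum Vs k ->
    (KK^-1)%VF v \in psum Vs k.+1.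
  move=> k hk; apply: sum_closed => j _ v hv.
  have hjk : (j <= k)%N by exact: (ltn_ord j).
  have hjd : (j <= d)%N by move: hjk hk; clear; lia.
  have hj1 : (j.+1 <= d)%N by move: hjk hk; clear; lia.
  have H : A ((KK^-1)%VF v - (e j)^-1 *: v) = (q * q * (a * e j)) *: ((KK^-1)%VF v - (e j)^-1 *: v).
    apply: (shift_lem q0 hq2 (hA j hjd v hv)); last by rewrite mulfK.
    by rewrite id1 scale_lfunE id_lfunE.
  have hw : (KK^-1)%VF v - (e j)^-1 *: v \in Vs j.+1.
    rewrite hVs // eigenP H; apply/eqP; congr (_ *: _).
    by rewrite -/(e j.+1) eS; ring.
  rewrite -(subrK ((e j)^-1 *: v) ((KK^-1)%VF v)); apply: memvD.
    by apply: (subvP (@psum_sub _ _ Vs j.+1 k.+1 hjk)).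
  by apply: memvZ; apply: (subvP (@psum_sub _ _ Vs j k.+1 (leqW hjk))).
have id2 : (q - q^-1)^-1 *: (q *: (B \o (KK^-1)%VF)%VF - q^-1 *: ((KK^-1)%VF \o B)%VF)
        = b *: \1%VF.
  case: (decB) => _ _ fullB.
  apply: (lfun_eq_on fullB) => i hi u hu.
  rewrite [X in _ = X]scale_lfunE id_lfunE.
  have gu : B u = (b * e i) *: u := hB i hi u hu.
  have fu : (KK^-1)%VF u = (e i)^-1 *: u + ((KK^-1)%VF u - (e i)^-1 *: u) by rewrite addrC subrK.
  have gw : q *: B ((KK^-1)%VF u - (e i)^-1 *: u) = (q^-1 * (b * e i)) *: ((KK^-1)%VF u - (e i)^-1 *: u).
    move: (hu) => /memv_capP [hu1 hu2].
    have w1 : (KK^-1)%VF u - (e i)^-1 *: u \in ppre Vss i.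
      rewrite -lfE_shift; move: (subvP (L1a i hi) u hu1); apply: sum_closed => j hji v hv.
      have hjd : (j <= d)%N by exact: leq_trans hji hi.
      rewrite lfE_shift (hKi j hjd v hv) -scalerBl.
      have [hji' | hji'] := eqVneq (j : nat) i.
        by rewrite hji' subrr scale0r mem0v.
      have hlt : (j < i)%N by rewrite ltn_neqAle hji' hji.
      rewrite /ppre; move: hlt; clear hji hji' hjd; case: i hi hu hu1 hu2 gu fu => [|i'] // hi hu hu1 hu2 gu fu hlt.
      apply: memvZ; apply: (subvP (@psumS _ _ Vss j i' hlt)).
      by move/memv_capP: hv => [].
    move: w1; rewrite /ppre.
    case: i hi hu hu1 hu2 gu fu => [|i'] hi hu hu1 hu2 gu fu w1.
      by move: w1; rewrite memv0 => /eqP ->; rewrite linear0 !scaler0.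
    have hk : (d - i'.+1 < d)%N by move: hi; clear; lia.
    have w2 : (KK^-1)%VF u - (e i'.+1)^-1 *: u \in psum Vs (d - i').
      have -> : (d - i' = (d - i'.+1).+1)%N by move: hi; clear; lia.
      apply: memvB; first exact: Kinv_shift _ hk _ hu2.
      by apply: memvZ; apply: (subvP (@psumS _ _ Vs _ _ (leqnSn _))).
    have hi' : (i' <= d)%N by move: hi; clear; lia.
    have hw : (KK^-1)%VF u - (e i'.+1)^-1 *: u \in (psum Vss i' :&: psum Vs (d - i'))%VS.
      by rewrite memv_cap w1 w2.
    rewrite (hB i' hi' _ hw) scalerA; congr (_ *: _).
    by rewrite -/(e i') eS; move: (e i') => x; field.
  by have := comm_alg hq2 gu fu gw; rewrite mulrC mulfK.
have id3 : (q - q^-1)^-1 *: (q *: (KK \o As)%VF - q^-1 *: (As \o KK)%VF)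
        = as_ *: \1%VF.
  apply: (lfun_eq_on fullK) => i hi u hu.
  rewrite [X in _ = X]scale_lfunE id_lfunE.
  have gu : KK u = e i *: u := hK i hi u hu.
  have fu : As u = (as_ * (e i)^-1) *: u + (As u - (as_ * (e i)^-1) *: u) by rewrite addrC subrK.
  have gw : q *: KK (As u - (as_ * (e i)^-1) *: u) = (q^-1 * e i) *: (As u - (as_ * (e i)^-1) *: u).
    move: (hu) => /memv_capP [hu1 hu2].
    have w1 := FAsss i hi u hu1.
    have w2 := FAsVs i hi u hu2.
    move: w1 w2; rewrite /ppre.
    case: i hi hu hu1 hu2 gu fu => [|i'] hi hu hu1 hu2 gu fu w1 w2.
      by move: w1; rewrite memv0 => /eqP ->; rewrite linear0 !scaler0.
    have hi' : (i' <= d)%N by exact: ltnW.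
    have hw : As u - (as_ * (e i'.+1)^-1) *: u \in (psum Vss i' :&: ssum Vs d i')%VS.
      rewrite memv_cap w1 /=; apply: memvB; first exact: w2.
      by apply: memvZ; apply: (subvP (@ssumS _ _ Vs d i' i'.+1 (leqnSn _))).
    rewrite (hK i' hi' _ hw) scalerA; congr (_ *: _).
    by rewrite -/(e i') eS; move: (e i') => x; field.
  by have := comm_alg hq2 gu fu gw; rewrite mulfVK.
have K_shift : forall k, (0 < k)%N -> (k <= d)%N -> forall v, v \in ssum Vss d k ->
    KK v \in ssum Vss d k.-1.
  move=> k hk0 hkd v; rewrite ssumE; move: v; apply: sum_closed => j hkj v hv.
  have hjd : (j <= d)%N by exact: (ltn_ord j).
  have H : As (KK v - e j *: v) = (q * q * (as_ * (e j)^-1)) *: (KK v - e j *: v).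
    apply: (shift_lem q0 hq2 (hAs j hjd v hv)); last by rewrite mulfVK.
    by rewrite id3 scale_lfunE id_lfunE.
  have hj0 : (0 < j)%N by exact: leq_trans hk0 hkj.
  have hj1 : (j.-1 <= d)%N by exact: leq_trans (leq_pred _) hjd.
  have hw : KK v - e j *: v \in Vss j.-1.
    rewrite hVss // eigenP H; apply/eqP; congr (_ *: _).
    rewrite eN -(prednK hj0) eS prednK //; move: (e j.-1) (e0 j.-1) => x x0.
    by field; rewrite x0 q0.
  rewrite -(subrK (e j *: v) (KK v)); apply: memvD.
    apply: (subvP (@ssum_sub _ _ Vss d j.-1 k.-1 _ hj1)) => //.
    by rewrite -!subn1 leq_sub2r.
  apply: memvZ; apply: (subvP (@ssum_sub _ _ Vss d j k.-1 _ hjd)) => //.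
  exact: leq_trans (leq_pred _) hkj.
have id4 : (q - q^-1)^-1 *: (q *: (Bs \o KK)%VF - q^-1 *: (KK \o Bs)%VF)
        = bs *: \1%VF.
  case: (decBs) => _ _ fullBs.
  apply: (lfun_eq_on fullBs) => i hi u hu.
  rewrite [X in _ = X]scale_lfunE id_lfunE.
  have gu : Bs u = (bs * (e i)^-1) *: u by rewrite (hBs i hi u hu) eN.
  have fu : KK u = e i *: u + (KK u - e i *: u) by rewrite addrC subrK.
  have gw : q *: Bs (KK u - e i *: u) = (q^-1 * (bs * (e i)^-1)) *: (KK u - e i *: u).
    move: (hu) => /memv_capP [hu1 hu2].
    have w2 : KK u - e i *: u \in ssum Vs d i.+1.
      rewrite -lfE_shift; move: (subvP (L1b i hi) u hu2); apply: sum_closed => j hij v hv.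
      have hjd : (j <= d)%N by exact: (ltn_ord j).
      rewrite lfE_shift (hK j hjd v hv) -scalerBl.
      have [hji' | hji'] := eqVneq (j : nat) i.
        by rewrite hji' subrr scale0r mem0v.
      have hlt : (i < j)%N by rewrite ltn_neqAle eq_sym hji' hij.
      apply: memvZ; apply: (subvP (@ssumS _ _ Vs d i.+1 j hlt)).
      by move/memv_capP: hv => [].
    case: (ltnP i d) => hid; last first.
      have : KK u - e i *: u = 0.
        by apply/eqP; rewrite -memv0 -(@ssum_empty _ _ Vs d i.+1) //; move: hi hid; clear; lia.
      by move=> ->; rewrite linear0 !scaler0.
    have w1 : KK u - e i *: u \in ssum Vss d (d - i.+1).
      have hk0 : (0 < d - i)%N by move: hid; clear; lia.
      have hkd : (d - i <= d)%N by exact: leq_subr.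
      have -> : (d - i.+1 = (d - i).-1)%N by move: hid; clear; lia.
      have HH := K_shift (d - i)%N hk0 hkd u hu1.
      apply: memvB; first exact: HH.
      by apply: memvZ; apply: (subvP (@ssumS _ _ Vss d _ _ (leq_pred _))).
    have hw : KK u - e i *: u \in (ssum Vss d (d - i.+1) :&: ssum Vs d i.+1)%VS.
      by rewrite memv_cap w1 w2.
    rewrite (hBs i.+1 hid _ hw) eN scalerA; congr (_ *: _).
    by rewrite -/(e i) eS; move: (e i) (e0 i) => x x0; field; rewrite x0 q0.
  by have := comm_alg hq2 gu fu gw; rewrite mulrC mulfVK.
by split.
Qed.
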